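(* Let $k$ be a field and suppose $Y,Z$ are objects of $\mathcal S_2(k)$ of the same partition type $(\alpha,\beta,\gamma)$. (1) $\delta H(Y,Z)_X=0$ for $X=P_1^1$ and for $X=P_0^m$, $X=P_2^m$ for every $m\in\mathbb N$. (2) For every $r\ge1$, $\lim_{m\to\infty}\delta H(Y,Z)_{B_2^{m,r}}=\delta H(Y,Z)_{P_1^r}$.
   Context: For a partition $\alpha$ let $N_\alpha=\bigoplus_ik[T]/(T^{\alpha_i})$. $\mathcal S(k)$: objects are triples $(N_\alpha,N_\beta,f)$ with $f$ an injective $k[T]$-map; morphisms are pairs $(\psi_1,\psi_2)$ of $k[T]$-maps with $f'\psi_1=\psi_2f$. $\mathcal S_2(k)$: objects with $\alpha_1\le2$. Partition type $(\alpha,\beta,\gamma)$: $\operatorname{Coker}f\cong N_\gamma$. Pickets: $P_\ell^m=(N_{(\ell)},N_{(m)},\iota)$ for $0\le\ell\le\min\{2,m\}$, $\iota$ the inclusion of the unique $\ell$-dimensional $T$-invariant subspace. Bipickets: $B_2^{m,r}=(N_{(2)},N_{(m,r)},\delta)$ for $1\le r\le m-2$, with $\delta(1)=(T^{m-2},T^{r-1})$. For objects $X,Y,Z$ put $[X,Y]=\dim_k\operatorname{Hom}_{\mathcal S}(X,Y)$ and $\delta H(Y,Z)_X=[X,Z]-[X,Y]$. *)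

(* Defs.v *)
From HB Require Import structures.
From mathcomp Require Import all_boot all_order all_algebra.
Set Implicit Arguments. Unset Strict Implicit. Unset Printing Implicit Defensive.
Import GRing.Theory.
Local Open Scope ring_scope.

Definition is_partition (s : seq nat) : bool :=
  sorted geq s && all (fun x => (0 < x)%N) s.

(* N_alpha = (+)_i k[T]/(T^alpha_i) as the k-space k^(|alpha|) (column vectors),
   with basis T^p * 1_t (t-th summand, 0 <= p < alpha_t), ordered summand by
   summand; the action of T is the matrix Tmat alpha (nilpotent Jordan blocks). *)
Definition partial_sums (s : seq nat) : seq nat :=
  [seq sumn (take n s) | n <- iota 0 (size s).+1].

Definition Tmat (k : fieldType) (s : seq nat) : 'M[k]_(sumn s) :=
  \matrix_(i, j) ((i == (j : nat).+1 :> nat) && ((i : nat) \notin partial_sums s))%:R.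

Definition gen_elt (k : fieldType) (s : seq nat) (t p : nat) : 'cV[k]_(sumn s) :=
  Tmat k s ^+ p *m \col_i ((i : nat) == sumn (take t s) :> nat)%:R.

(* The k[T]-map N_(l) -> N_s sending the generator 1 to v (requires T^l v = 0):
   its j-th column is T^j v. *)
Definition from_gen (k : fieldType) (l : nat) (s : seq nat) (v : 'cV[k]_(sumn s))
  : 'M[k]_(sumn s, sumn [:: l]) :=
  \matrix_(i, j) ((Tmat k s ^+ j *m v) i ord0).

(* Objects (N_alpha, N_beta, f) of S(k); the data of a candidate triple. *)
Record sobj (k : fieldType) := SObj {
  sa : seq nat;
  sb : seq nat;
  smap : 'M[k]_(sumn sb, sumn sa) }.

Definition is_sobj (k : fieldType) (X : sobj k) : Prop :=
  [/\ is_partition (sa X), is_partition (sb X),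
      smap X *m Tmat k (sa X) = Tmat k (sb X) *m smap X
    & forall v : 'cV[k]_(sumn (sa X)), smap X *m v = 0 -> v = 0].

Definition is_sobj2 (k : fieldType) (X : sobj k) : Prop :=
  is_sobj X /\ all (fun a => (a <= 2)%N) (sa X).

(* Partition type (alpha, beta, gamma): Coker f = N_gamma, i.e. there is a
   surjective k[T]-map g : N_beta -> N_gamma with kernel Im f. *)
Definition has_ptype (k : fieldType) (X : sobj k) (al be ga : seq nat) : Prop :=
  [/\ sa X = al, sb X = be, is_partition ga &
   exists g : 'M[k]_(sumn ga, sumn (sb X)),
     [/\ g *m Tmat k (sb X) = Tmat k ga *m g,
         (forall w : 'cV[k]_(sumn ga), exists v, g *m v = w)
       & forall v : 'cV[k]_(sumn (sb X)),
           g *m v = 0 <-> exists u, v = smap X *m u]].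

(* Hom_S(X, Y): pairs (psi1, psi2) of k[T]-maps with f' psi1 = psi2 f; it is
   the kernel of the following k-linear map. *)
Definition hom_cond (k : fieldType) (X Y : sobj k)
  (p : 'M[k]_(sumn (sa Y), sumn (sa X)) * 'M[k]_(sumn (sb Y), sumn (sb X)))
  : 'M[k]_(sumn (sa Y), sumn (sa X)) * 'M[k]_(sumn (sb Y), sumn (sb X))
    * 'M[k]_(sumn (sb Y), sumn (sa X)) :=
  (p.1 *m Tmat k (sa X) - Tmat k (sa Y) *m p.1,
   p.2 *m Tmat k (sb X) - Tmat k (sb Y) *m p.2,
   smap Y *m p.1 - p.2 *m smap X).

Definition hom_space (k : fieldType) (X Y : sobj k) :=
  lker (linfun (@hom_cond k X Y)).

Definition homdim (k : fieldType) (X Y : sobj k) : nat := \dim (hom_space X Y).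

Definition deltaH (k : fieldType) (Y Z X : sobj k) : int :=
  (homdim X Z)%:Z - (homdim X Y)%:Z.

Definition part1 (l : nat) : seq nat := if l is 0 then [::] else [:: l].

(* Picket P_l^m = (N_(l), N_(m), iota), iota the inclusion of the unique
   l-dimensional T-invariant subspace T^(m-l) N_(m): 1 |-> T^(m-l). *)
Definition picket (k : fieldType) (l m : nat) : sobj k :=
  @SObj k (part1 l) (part1 m)
    (\matrix_(i, j) ((i : nat) == ((j : nat) + (m - l))%N :> nat)%:R).

(* Bipicket B_2^{m,r} = (N_(2), N_(m,r), delta), delta(1) = (T^(m-2), T^(r-1)). *)
Definition bipicket (k : fieldType) (m r : nat) : sobj k :=
  @SObj k [:: 2] [:: m; r]
    (from_gen 2 (gen_elt k [:: m; r] 0 (m - 2)%N + gen_elt k [:: m; r] 1 (r - 1)%N)).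

(* Main.v *)
Require Import Defs.
From HB Require Import structures.
From mathcomp Require Import all_boot all_order all_algebra zify.
Set Implicit Arguments. Unset Strict Implicit. Unset Printing Implicit Defensive.
Import GRing.Theory.
Local Open Scope ring_scope.

Lemma lfunE_lin (k : fieldType) (aT rT : vectType k) (f : aT -> rT) (hf : linear f) :
  linfun f =1 f.
Proof.
pose fL : {linear aT -> rT} := HB.pack f (GRing.isLinear.Build _ _ _ _ f hf).
exact: (lfunE fL).
Qed.

Lemma ps_m m : partial_sums [:: m] = [:: 0%N; m].
Proof. by rewrite /partial_sums /= addn0. Qed.
Lemma ps_mr m r : partial_sums [:: m; r] = [:: 0%N; m; (m + r)%N].
Proof. by rewrite /partial_sums /= !addn0. Qed.

Section E.
Variable k : fieldType.

Definition ev n c : 'cV[k]_n := \col_i ((i : nat) == c)%:R.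

Lemma ev_delta n (j : 'I_n) : ev n j = delta_mx j ord0.
Proof. by apply/matrixP=> i l; rewrite !mxE (ord1 l) eqxx andbT. Qed.

Lemma ev_out n c : (n <= c)%N -> ev n c = 0.
Proof.
move=> h; apply/matrixP=> i l; rewrite !mxE.
by case: eqP => // ei; move: (ltn_ord i); rewrite ei ltnNge h.
Qed.

Lemma mul_ev m n (A : 'M[k]_(m, n)) (j : 'I_n) : A *m ev n j = col j A.
Proof. by rewrite ev_delta colE. Qed.

Lemma mx_evP m n (A B : 'M[k]_(m, n)) :
  (forall c, (c < n)%N -> A *m ev n c = B *m ev n c) -> A = B.
Proof.
move=> h; apply/matrixP=> i j; have := h j (ltn_ord j).
rewrite !mul_ev => /matrixP /(_ i ord0); by rewrite !mxE.
Qed.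

Lemma T_ev s c : Tmat k s *m ev (sumn s) c =
  if c.+1 \notin partial_sums s then ev (sumn s) c.+1 else 0.
Proof.
case: (ltnP c (sumn s)) => hc; last first.
  by rewrite ev_out // ev_out ?mulmx0 ?if_same // ltnW.
have -> : c = Ordinal hc by [].
rewrite mul_ev; apply/matrixP=> i l; rewrite !mxE /=.
case: ifP => hp; rewrite !mxE //.
  by case: eqP => // ->; rewrite hp.
by case: eqP => // ->; rewrite hp.
Qed.

Lemma Tpow_ev s p c : (Tmat k s ^+ p *m ev (sumn s) c = ev (sumn s) (c + p)%N)
   \/ (Tmat k s ^+ p *m ev (sumn s) c = 0).
Proof.
elim: p => [|p IH]; first by left; rewrite expr0 mul1mx addn0.
rewrite exprS -mulmxE -mulmxA; case: IH => ->; last by right; rewrite mulmx0.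
rewrite T_ev addnS; case: ifP => _; [left|right] => //.
Qed.

Lemma Tpow_big s p : (sumn s <= p)%N -> Tmat k s ^+ p = 0.
Proof.
move=> h; apply: mx_evP => c hc; rewrite mul0mx.
case: (Tpow_ev s p c) => // ->; rewrite ev_out //.
by apply: leq_trans h _; rewrite leq_addl.
Qed.

End E.

Lemma ps_cons a s : partial_sums (a :: s) = 0%N :: map (addn a) (partial_sums s).
Proof.
rewrite /partial_sums.
have -> : iota 0 (size (a :: s)).+1 = 0%N :: map (addn 1) (iota 0 (size s).+1)
  by rewrite -iotaDl.
rewrite map_cons -!map_comp; congr (_ :: _); by apply: eq_map => n /=.
Qed.

Lemma ps0 s : 0%N \in partial_sums s.
Proof. by case: s => [|a s]; rewrite ?ps_cons // /partial_sums /= inE. Qed.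

Lemma ps_le2 s : all (fun a => (a <= 2)%N) s -> forall d, (0 < d)%N -> (d <= sumn s)%N ->
  (d \in partial_sums s) || (d.+1 \in partial_sums s).
Proof.
elim: s => [|a s IH]; first by move=> _ d d0 dn; move: (leq_trans d0 dn).
rewrite [all _ _]/= [sumn _]/=; move=> /andP [ha hs] d d0 dn; rewrite ps_cons; have := ps0 s; move: (partial_sums s) IH => P IH P0; rewrite !in_cons.
case: (ltnP a d) => hd.
  have -> : d = (a + (d - a))%N by lia.
  set d' := (d - a)%N.
  rewrite -addnS !(mem_map (@addnI a)).
  have h1 : (0 < d')%N by rewrite /d'; lia.
  have h2 : (d' <= sumn s)%N by rewrite /d'; lia.
  by case/orP: (IH hs d' h1 h2) => ->; rewrite ?orbT.
have ha0 : (a + 0)%N \in map (addn a) P by rewrite map_f.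
rewrite addn0 in ha0.
have : (d == a) || (d.+1 == a) by lia.
by case/orP => /eqP ->; rewrite ha0 ?orbT.
Qed.

Lemma Tsq0 (k : fieldType) s : all (fun a => (a <= 2)%N) s -> Tmat k s ^+ 2 = 0.
Proof.
move=> hs; apply: mx_evP => c hc; rewrite mul0mx expr2 -mulmxE -mulmxA T_ev.
case: ifP => h1; last by rewrite mulmx0.
rewrite T_ev; case: ifP => h2 //.
case: (ltnP c.+2 (sumn s)) => h3; last by rewrite ev_out.
by have := ps_le2 hs (d:=c.+1) isT hc; rewrite (negbTE h1) (negbTE h2).
Qed.

Section Hom.
Variable k : fieldType.

Lemma lin_aux m n (A : 'M[k]_n) (B : 'M[k]_m) a (u v : 'M[k]_(m, n)) :
  (a *: u + v) *m A - B *m (a *: u + v) = a *: (u *m A - B *m u) + (v *m A - B *m v).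
Proof.
rewrite mulmxDl mulmxDr -scalemxAl -scalemxAr scalerBr.
by rewrite opprD addrACA.
Qed.

Lemma lin_aux2 m n p q (F : 'M[k]_(m, n)) (G : 'M[k]_(q, p)) a (u v : 'M[k]_(n, p)) (w z : 'M[k]_(m, q)) :
  F *m (a *: u + v) - (a *: w + z) *m G = a *: (F *m u - w *m G) + (F *m v - z *m G).
Proof.
rewrite mulmxDl mulmxDr -scalemxAl -scalemxAr scalerBr.
by rewrite opprD addrACA.
Qed.

Lemma hom_cond_lin (X Y : sobj k) : linear (@hom_cond k X Y).
Proof.
move=> a [u1 u2] [v1 v2]; rewrite /hom_cond /=.
by rewrite lin_aux lin_aux lin_aux2.
Qed.

Lemma homP (X Y : sobj k) p : reflect
  [/\ p.1 *m Tmat k (sa X) = Tmat k (sa Y) *m p.1,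
      p.2 *m Tmat k (sb X) = Tmat k (sb Y) *m p.2 &
      smap Y *m p.1 = p.2 *m smap X] (p \in hom_space X Y).
Proof.
rewrite /hom_space memv_ker lfunE_lin; last exact: hom_cond_lin.
rewrite /hom_cond; apply: (iffP eqP).
  by case=> /eqP; rewrite subr_eq0 => /eqP -> /eqP; rewrite subr_eq0 => /eqP -> /eqP; rewrite subr_eq0 => /eqP ->.
by case=> -> -> ->; rewrite !subrr.
Qed.

End Hom.

Section Blocks.
Variable k : fieldType.
Local Notation T := (Tmat k).
Local Notation ev := (ev k).

Lemma comm_pow m n (A : 'M[k]_(m, n)) (T1 : 'M[k]_n) (T2 : 'M[k]_m) j :
  A *m T1 = T2 *m A -> A *m T1 ^+ j = T2 ^+ j *m A.
Proof.
move=> h; elim: j => [|j IH]; first by rewrite !expr0 mulmx1 mul1mx.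
by rewrite !exprSr -!mulmxE mulmxA IH -!mulmxA h.
Qed.

Lemma fg_ev l s (x : 'cV[k]_(sumn s)) c : (c < l)%N ->
  @from_gen k l s x *m ev (sumn [:: l]) c = T s ^+ c *m x.
Proof.
move=> hc; have hc' : (c < sumn [:: l])%N by rewrite /= addn0.
have -> : c = Ordinal hc' by [].
rewrite mul_ev; apply/matrixP => i j; by rewrite !mxE (ord1 j).
Qed.

Lemma ev1 m j : (j < m)%N -> ev (sumn [:: m]) j = T [:: m] ^+ j *m ev (sumn [:: m]) 0.
Proof.
elim: j => [|j IH] hj; first by rewrite expr0 mul1mx.
rewrite exprS -mulmxE -mulmxA -IH ?(ltnW hj) // T_ev ps_m !inE.
by rewrite /= (ltn_eqF hj).
Qed.

Lemma ev2a m r j : (j < m)%N -> ev (sumn [:: m; r]) j = T [:: m; r] ^+ j *m ev (sumn [:: m; r]) 0.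
Proof.
elim: j => [|j IH] hj; first by rewrite expr0 mul1mx.
rewrite exprS -mulmxE -mulmxA -IH ?(ltnW hj) // T_ev ps_mr !inE.
have h1 : (j.+1 == m) = false by apply/eqP; lia.
have h2 : (j.+1 == m + r)%N = false by apply/eqP; lia.
by rewrite /= h1 h2.
Qed.

Lemma ev2b m r j : (j < r)%N -> ev (sumn [:: m; r]) (m + j)%N = T [:: m; r] ^+ j *m ev (sumn [:: m; r]) m.
Proof.
elim: j => [|j IH] hj; first by rewrite expr0 mul1mx addn0.
rewrite exprS -mulmxE -mulmxA -IH ?(ltnW hj) // T_ev ps_mr !inE.
have h1 : ((m + j).+1 == m) = false by apply/eqP; lia.
have h2 : ((m + j).+1 == m + r)%N = false by apply/eqP; lia.
by rewrite addnS /= h1 h2.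
Qed.

Lemma sum1 m : sumn [:: m] = m.
Proof. by rewrite /= addn0. Qed.

Lemma nps_m m c : (c.+1 \notin partial_sums [:: m]) = (c.+1 != m).
Proof. by rewrite ps_m !inE. Qed.
Lemma nps_mr m r c : (c.+1 \notin partial_sums [:: m; r]) = (c.+1 != m) && (c.+1 != m + r)%N.
Proof. by rewrite ps_mr !inE /= negb_or. Qed.

Lemma TS n (A : 'M[k]_n) c m (x : 'M[k]_(n, m)) : A *m (A ^+ c *m x) = A ^+ c.+1 *m x.
Proof. by rewrite exprS -mulmxE mulmxA. Qed.

Lemma L4 s m (q : 'M[k]_(sumn s, sumn [:: m])) :
  q *m T [:: m] = T s *m q -> T s ^+ m *m (q *m ev _ 0) = 0.
Proof.
have H0 : T [:: m] ^+ m = 0 by apply: Tpow_big; rewrite sum1.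
by move=> h; rewrite mulmxA -(comm_pow _ h) H0 mulmx0 mul0mx.
Qed.

Lemma L3 s m (q : 'M[k]_(sumn s, sumn [:: m])) :
  q *m T [:: m] = T s *m q -> q = from_gen m (q *m ev _ 0).
Proof.
move=> h; apply: mx_evP => c hc; rewrite sum1 in hc.
by rewrite fg_ev // ev1 // mulmxA (comm_pow _ h) mulmxA.
Qed.

Lemma L5 s m (x : 'cV[k]_(sumn s)) : T s ^+ m *m x = 0 ->
  from_gen m x *m T [:: m] = T s *m from_gen m x.
Proof.
move=> h; apply: mx_evP => c hc; rewrite sum1 in hc.
rewrite -mulmxA T_ev nps_m -mulmxA (fg_ev _ hc) TS.
case: (ltnP c.+1 m) => h1.
  by rewrite (ltn_eqF h1) /= fg_ev.
have -> : c.+1 = m by apply/eqP; rewrite eqn_leq h1 hc.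
by rewrite eqxx /= mulmx0 h.
Qed.

Lemma L6 s m (x : 'cV[k]_(sumn s)) : (0 < m)%N -> from_gen m x *m ev _ 0 = x.
Proof. by move=> h; rewrite fg_ev // expr0 mul1mx. Qed.

Definition Qm s m r (x y : 'cV[k]_(sumn s)) : 'M[k]_(sumn s, sumn [:: m; r]) :=
  \matrix_(i, j) (if ((j : nat) < m)%N then (T s ^+ j *m x) i 0 else (T s ^+ (j - m) *m y) i 0).

Lemma Qm_ev s m r (x y : 'cV[k]_(sumn s)) c : (c < m + r)%N ->
  Qm m r x y *m ev _ c = if (c < m)%N then T s ^+ c *m x else T s ^+ (c - m) *m y.
Proof.
move=> hc; have hc' : (c < sumn [:: m; r])%N by rewrite /= addn0.
have -> : c = Ordinal hc' by [].
rewrite mul_ev; apply/matrixP => i j; rewrite (ord1 j) !mxE /=.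
by case: ifP => _; rewrite mxE.
Qed.

Lemma Qm_comm s m r (x y : 'cV[k]_(sumn s)) : T s ^+ m *m x = 0 -> T s ^+ r *m y = 0 ->
  Qm m r x y *m T [:: m; r] = T s *m Qm m r x y.
Proof.
move=> hx hy; apply: mx_evP => c hc; rewrite /= addn0 in hc.
rewrite -mulmxA T_ev nps_mr -mulmxA Qm_ev // !fun_if TS.
case: (ltnP c m) => h1.
  case: (ltnP c.+1 m) => h2.
    have e1 : (c.+1 == m) = false by apply/eqP; lia.
    have e2 : (c.+1 == m + r)%N = false by apply/eqP; lia.
    by rewrite e1 e2 /= Qm_ev ?h2 //; lia.
  have -> : c.+1 = m by lia.
  by rewrite eqxx /= if_same /= mulmx0 hx.
case: (ltnP c.+1 (m + r)) => h2.
  have e1 : (c.+1 == m) = false by apply/eqP; lia.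
  have e2 : (c.+1 == m + r)%N = false by apply/eqP; lia.
  rewrite e1 e2 /= Qm_ev //.
  have -> : (c.+1 < m)%N = false by lia.
  by rewrite TS subSn.
have e2 : (c.+1 == m + r)%N by apply/eqP; lia.
have e1 : (c.+1 == m) = false by apply/eqP; lia.
rewrite e1 e2 /= mulmx0 TS.
have -> : (c - m).+1 = r by lia.
by rewrite hy.
Qed.

Lemma Qm_det s m r (q : 'M[k]_(sumn s, sumn [:: m; r])) :
  q *m T [:: m; r] = T s *m q -> q = Qm m r (q *m ev _ 0) (q *m ev _ m).
Proof.
move=> h; apply: mx_evP => c hc; rewrite /= addn0 in hc.
rewrite Qm_ev //; case: ifP => h1.
  by rewrite ev2a // mulmxA (comm_pow _ h) mulmxA.
have -> : c = (m + (c - m))%N by lia.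
rewrite ev2b; last by lia.
by rewrite mulmxA (comm_pow _ h) mulmxA addKn.
Qed.

End Blocks.

Section Gen.
Variable k : fieldType.

Lemma dim_inj (aT rT : vectType k) (H : {vspace aT}) (f : aT -> rT) (hf : linear f) :
  (forall p, p \in H -> f p = 0 -> p = 0) -> \dim H = \dim (linfun f @: H)%VS.
Proof.
move=> inj; apply/esym/limg_dim_eq; apply/eqP; rewrite -subv0; apply/subvP => p.
rewrite memv_cap memv_ker lfunE_lin // memv0 => /andP [hH /eqP h0].
by rewrite (inj p hH h0).
Qed.

Lemma img_charac (aT rT : vectType k) (H : {vspace aT}) (W : {vspace rT}) (f : aT -> rT)
  (hf : linear f) :
  (forall p, p \in H -> f p \in W) ->
  (forall w, w \in W -> exists2 p, p \in H & f p = w) -> (linfun f @: H)%VS = W.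
Proof.
move=> h1 h2; apply/vspaceP => w; apply/idP/idP.
  by case/memv_imgP => p hp ->; rewrite lfunE_lin // h1.
by case/h2 => p hp <-; rewrite -lfunE_lin // memv_img.
Qed.

Lemma smap_picket l m c : (c < sumn (part1 l))%N ->
  smap (picket k l m) *m ev k _ c = ev k _ (c + (m - l))%N.
Proof.
move=> hc; have -> : c = Ordinal hc by [].
by rewrite mul_ev; apply/matrixP => i j; rewrite (ord1 j) !mxE.
Qed.

Lemma Finj_mx (Y : sobj k) n (M : 'M[k]_(sumn (sa Y), n)) : is_sobj Y ->
  smap Y *m M = 0 -> M = 0.
Proof.
case=> _ _ _ hF h; apply: mx_evP => c hc; rewrite mul0mx; apply: hF.
by rewrite mulmxA h mul0mx.
Qed.

Definition G11 s := \dim (lker (linfun (@mulmx k (sumn s) (sumn s) (sumn [:: 1]) (Tmat k s)))).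

Lemma hom11 (Y : sobj k) : is_sobj Y -> homdim (picket k 1 1) Y = G11 (sa Y).
Proof.
move=> hY; have [_ _ FT hF] := hY.
have iota1 : smap (picket k 1 1) = 1%:M.
  by apply/matrixP => i j; rewrite (ord1 i) (ord1 j) !mxE.
have T1 : Tmat k (part1 1) = 0.
  by apply/matrixP => i j; rewrite (ord1 i) (ord1 j) !mxE.
rewrite /homdim (@dim_inj _ _ _ (fun p => p.1)); last first.
- move=> p /homP [h1 h2 h3] h0; rewrite h0 mulmx0 iota1 mulmx1 in h3.
  by case: p h0 h3 h1 h2 => p1 p2 /= -> <-.
- by move=> a u v.
rewrite /G11; congr (\dim _); apply: img_charac => //.
- move=> p /homP [h1 h2 h3]; rewrite memv_ker lfunE /=.
  by rewrite -h1 T1 mulmx0.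
- move=> w; rewrite memv_ker lfunE /= => /eqP hw.
  exists (w, smap Y *m w) => //; apply/(@homP _ (picket k 1 1) Y); split.
  + by rewrite T1 mulmx0 hw.
  + by rewrite T1 mulmx0 mulmxA -FT -mulmxA hw mulmx0.
  + by rewrite iota1 mulmx1.
Qed.

Definition G0 m s := \dim (lker (linfun (fun q : 'M[k]_(sumn s, sumn (part1 m)) =>
   q *m Tmat k (part1 m) - Tmat k s *m q))).

Lemma hom0 (Y : sobj k) m : homdim (picket k 0 m) Y = G0 m (sb Y).
Proof.
have lin : linear (fun q : 'M[k]_(sumn (sb Y), sumn (part1 m)) =>
   q *m Tmat k (part1 m) - Tmat k (sb Y) *m q) by move=> a u v; rewrite lin_aux.
rewrite /homdim (@dim_inj _ _ _ (fun p => p.2)); last first.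
- move=> p _ h0; case: p h0 => p1 p2 /= ->.
  by rewrite [p1]thinmx0.
- by move=> a u v.
rewrite /G0; congr (\dim _); apply: img_charac => //.
- move=> p /homP [h1 h2 h3]; rewrite memv_ker lfunE_lin //.
  by rewrite h2 subrr.
- move=> w; rewrite memv_ker lfunE_lin // subr_eq0 => /eqP hw.
  exists (0, w) => //; apply/(@homP _ (picket k 0 m) Y); split => //.
  + by rewrite [LHS]thinmx0 [RHS]thinmx0.
  + by rewrite [LHS]thinmx0 [RHS]thinmx0.
Qed.

End Gen.

Section Coker.
Variable k : fieldType.

Lemma coker_dim (b a c : nat) (F : 'M[k]_(b, a)) (TB : 'M[k]_b) (g : 'M[k]_(c, b)) (TG : 'M[k]_c) j :
  g *m TB = TG *m g -> (forall w : 'cV_c, exists v, g *m v = w) ->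
  (forall v : 'cV_b, g *m v = 0 <-> exists u, v = F *m u) ->
  (\dim (linfun (@mulmx k b b 1 (TB ^+ j)) @^-1: limg (linfun (@mulmx k b a 1 F)))%VS
   + \dim (limg (linfun (@mulmx k c c 1 (TG ^+ j)))) = b)%N.
Proof.
move=> hgT hsurj hker.
set Tp := linfun (@mulmx k b b 1 (TB ^+ j)).
set U := limg (linfun (@mulmx k b a 1 F)).
set G := linfun (@mulmx k c b 1 g).
set Tq := linfun (@mulmx k c c 1 (TG ^+ j)).
have s4 : (\dim (lker Tp) + \dim (limg Tp) = b)%N.
  have db : \dim (fullv : {vspace 'cV[k]_b}) = b by rewrite dimvf dim_matrix; exact: muln1.
  by rewrite -[in RHS]db -(limg_ker_dim Tp fullv) capfv.
have s2 : \dim (Tp @^-1: U)%VS = (\dim (lker Tp) + \dim (U :&: limg Tp))%N.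
  rewrite -(limg_ker_dim Tp (Tp @^-1: U)%VS).
  have -> : ((Tp @^-1: U) :&: lker Tp)%VS = lker Tp.
    by apply/capv_idPr; rewrite -lpreim0 lpreimS ?sub0v.
  by rewrite -lpreim_cap_limg lpreimK // capvSr.
have kerG : lker G = U.
  apply/vspaceP => v; rewrite memv_ker lfunE /=; apply/eqP/idP.
    by case/hker => u ->; apply/memv_imgP; exists u; rewrite ?memvf ?lfunE.
  by case/memv_imgP => u _; rewrite lfunE /= => ->; apply/hker; exists u.
have imG : limg G = fullv.
  apply/vspaceP => w; rewrite memvf; case: (hsurj w) => v <-.
  by rewrite -[g *m v]/(@mulmx k c b 1 g v) -lfunE memv_img ?memvf.
have comm : (G \o Tp = Tq \o G)%VF.
  apply/lfunP => v; rewrite !comp_lfunE !lfunE /= !mulmxA (comm_pow j hgT) //.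
have s3 : (\dim (U :&: limg Tp) + \dim (limg Tq) = \dim (limg Tp))%N.
  rewrite -(limg_ker_dim G (limg Tp)) capvC kerG; congr (_ + _)%N.
  by rewrite -limg_comp comm limg_comp imG.
by rewrite s2 -addnA s3 s4.
Qed.

End Coker.

Section Hom2.
Variable k : fieldType.

Lemma fg0 l s : @from_gen k l s 0 = 0.
Proof. by apply/matrixP => i j; rewrite !mxE big1 // => l0 _; rewrite mxE mulr0. Qed.

Lemma hom2 (Y : sobj k) al be ga m : is_sobj2 Y -> has_ptype Y al be ga -> (2 <= m)%N ->
  (homdim (picket k 2 m) Y
   + \dim (limg (linfun (@mulmx k (sumn ga) (sumn ga) 1 (Tmat k ga ^+ (m - 2))))) = sumn (sb Y))%N.
Proof.
move=> [hY hA2] hpt; case: m => [|[|m']] // _.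
case: hpt => ea eb hga [g [hgT hsurj hker]].
have [hpa hpb FT hF] := hY.
have TA2 : Tmat k (sa Y) ^+ 2 = 0 := Tsq0 k hA2.
rewrite -(coker_dim (F:=smap Y) (TB := Tmat k (sb Y)) (m'.+2 - 2) hgT hsurj hker).
congr (_ + _)%N.
have lin : linear (fun p : 'M[k]_(sumn (sa Y), sumn (sa (picket k 2 m'.+2))) *
                        'M[k]_(sumn (sb Y), sumn (sb (picket k 2 m'.+2))) => p.2 *m ev k _ 0).
  by move=> a u v; rewrite mulmxDl -scalemxAl.
rewrite /homdim (dim_inj lin); last first.
  move=> p /homP [h1 h2 h3] h0.
  have e2 : p.2 = 0 by rewrite (L3 h2) h0 fg0.
  rewrite e2 mul0mx in h3; have e1 := Finj_mx hY h3.
  by case: p e1 e2 h0 h1 h2 h3 => p1 p2 /= -> ->.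
congr (\dim _); apply: img_charac => //.
- move=> p /homP [h1 h2 h3]; rewrite -memv_preim lfunE /=.
  have hj : (m'.+2 - 2 < m'.+2)%N by lia.
  rewrite mulmxA -(comm_pow _ h2) -mulmxA -(ev1 k hj).
  have := smap_picket k m'.+2 (l:=2) (c:=0) isT; rewrite add0n => <-.
  rewrite mulmxA -h3; apply/memv_imgP; exists (p.1 *m ev k _ 0); rewrite ?memvf //.
  by rewrite lfunE /= mulmxA.
- move=> x; rewrite -memv_preim lfunE /= => /memv_imgP [a0 _]; rewrite lfunE /= => hx.
  have hTa : Tmat k (sa Y) ^+ 2 *m a0 = 0 by rewrite TA2 mul0mx.
  have hTx : Tmat k (sb Y) ^+ m'.+2 *m x = 0.
    have -> : m'.+2 = (2 + (m'.+2 - 2))%N by lia.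
    by rewrite exprD -mulmxE -mulmxA hx mulmxA -(comm_pow _ FT) -mulmxA hTa mulmx0.
  exists (from_gen 2 a0, from_gen m'.+2 x); last exact: (@L6 k (sb Y) m'.+2 x isT).
  apply/(@homP _ (picket k 2 m'.+2) Y); split.
  + exact: L5.
  + exact: L5.
  + apply: mx_evP => c hc; rewrite -!mulmxA smap_picket // fg_ev // fg_ev; last first.
      by move: hc; rewrite /= !subSS subn0; lia.
    rewrite mulmxA (comm_pow _ FT) exprD -mulmxE -[in RHS]mulmxA hx; by rewrite mulmxA.
Qed.

End Hom2.

Section HomB.
Variable k : fieldType.

Definition Wr (Y : sobj k) r : {vspace 'cV[k]_(sumn (sb Y))} :=
  (lker (linfun (@mulmx k _ _ 1 (Tmat k (sb Y) ^+ r))) :&: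
   (linfun (@mulmx k _ _ 1 (Tmat k (sb Y) ^+ (r - 1))) @^-1:
      limg (linfun (@mulmx k _ _ 1 (smap Y)))))%VS.

Lemma Wr_mem (Y : sobj k) r y : (y \in Wr Y r) =
  (Tmat k (sb Y) ^+ r *m y == 0) && (Tmat k (sb Y) ^+ (r - 1) *m y \in limg (linfun (@mulmx k _ _ 1 (smap Y)))).
Proof. by rewrite memv_cap memv_ker -memv_preim !lfunE. Qed.

Lemma in_limgF (Y : sobj k) u : smap Y *m u \in limg (linfun (@mulmx k _ _ 1 (smap Y))).
Proof. by rewrite -[smap Y *m u]/(@mulmx k _ _ 1 (smap Y) u) -lfunE memv_img ?memvf. Qed.

Lemma limgFP (Y : sobj k) y : y \in limg (linfun (@mulmx k _ _ 1 (smap Y))) -> exists u, y = smap Y *m u.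
Proof. by case/memv_imgP => u _; rewrite lfunE => ->; exists u. Qed.

Lemma homP1 (Y : sobj k) r : is_sobj Y -> (1 <= r)%N -> homdim (picket k 1 r) Y = \dim (Wr Y r).
Proof.
move=> hY; have [hpa hpb FT hF] := hY; case: r => [|r'] // _.
have lin : linear (fun p : 'M[k]_(sumn (sa Y), sumn (sa (picket k 1 r'.+1))) *
                        'M[k]_(sumn (sb Y), sumn (sb (picket k 1 r'.+1))) => p.2 *m ev k _ 0).
  by move=> a u v; rewrite mulmxDl -scalemxAl.
rewrite /homdim (dim_inj lin); last first.
  move=> p /homP [h1 h2 h3] h0.
  have e2 : p.2 = 0 by rewrite (L3 h2) h0 fg0.
  rewrite e2 mul0mx in h3; have e1 := Finj_mx hY h3.
  by case: p e1 e2 h0 h1 h2 h3 => p1 p2 /= -> ->.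
congr (\dim _); apply: img_charac => //.
- move=> p /homP [h1 h2 h3]; rewrite Wr_mem (L4 h2) eqxx /=.
  have hj : (r'.+1 - 1 < r'.+1)%N by lia.
  rewrite mulmxA -(comm_pow _ h2) -mulmxA -(ev1 k hj).
  have := smap_picket k r'.+1 (l:=1) (c:=0) isT; rewrite add0n => <-.
  by rewrite mulmxA -h3 -mulmxA in_limgF.
- move=> y; rewrite Wr_mem => /andP [/eqP hy /limgFP [a0 ha]].
  have hTa : Tmat k (sa Y) ^+ 1 *m a0 = 0.
    apply: hF; rewrite mulmxA (comm_pow _ FT) -mulmxA -ha. rewrite expr1 TS.
    have -> : (r'.+1 - 1).+1 = r'.+1 by lia.
    exact: hy.
  exists (from_gen 1 a0, from_gen r'.+1 y); last exact: (@L6 k (sb Y) r'.+1 y isT).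
  apply/(@homP _ (picket k 1 r'.+1) Y); split.
  + exact: L5.
  + exact: L5.
  + apply: mx_evP => c hc; rewrite -!mulmxA smap_picket // fg_ev // fg_ev; last first.
      by move: hc; rewrite /=; lia.
    have -> : c = 0%N by move: hc; rewrite /=; lia.
    by rewrite expr0 mul1mx add0n ha.
Qed.

End HomB.

Section HomB2.
Variable k : fieldType.
Local Notation T := (Tmat k).

Lemma gv m r : gen_elt k [:: m; r] 0 (m - 2) + gen_elt k [:: m; r] 1 (r - 1) =
  T [:: m; r] ^+ (m - 2) *m ev k _ 0 + T [:: m; r] ^+ (r - 1) *m ev k _ m.
Proof.
rewrite /gen_elt; congr (_ *m _ + _ *m _); apply/matrixP => i j; rewrite !mxE /=. by case: i => i hi /=; rewrite addn0.
Qed.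

Lemma Qv s m r (q : 'M[k]_(sumn s, sumn [:: m; r])) : q *m T [:: m; r] = T s *m q ->
  q *m (T [:: m; r] ^+ (m - 2) *m ev k _ 0 + T [:: m; r] ^+ (r - 1) *m ev k _ m) =
  T s ^+ (m - 2) *m (q *m ev k _ 0) + T s ^+ (r - 1) *m (q *m ev k _ m).
Proof.
by move=> h; rewrite mulmxDr !mulmxA !(comm_pow _ h).
Qed.

Lemma Qm00 s m r : @Qm k s m r 0 0 = 0.
Proof.
apply/matrixP => i j; rewrite !mxE; case: ifP => _;
by rewrite big1 // => l0 _; rewrite mxE mulr0.
Qed.

End HomB2.

Section HomB3.
Variable k : fieldType.
Local Notation T := (Tmat k).

Lemma homB (Y : sobj k) m r : is_sobj2 Y -> (1 <= r)%N -> (sumn (sb Y) + 2 <= m)%N ->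
  homdim (bipicket k m r) Y = (sumn (sb Y) + \dim (Wr Y r))%N.
Proof.
move=> [hY hA2] hr hm; have [hpa hpb FT hF] := hY.
have TA2 : T (sa Y) ^+ 2 = 0 := Tsq0 k hA2.
have Tm2 : T (sb Y) ^+ (m - 2) = 0 by apply: Tpow_big; lia.
have Tm : T (sb Y) ^+ m = 0 by apply: Tpow_big; lia.
have edelta : smap (bipicket k m r) =
   from_gen 2 (gen_elt k [:: m; r] 0 (m - 2) + gen_elt k [:: m; r] 1 (r - 1)) by [].
have dlt : forall q : 'M[k]_(sumn (sb Y), sumn [:: m; r]), q *m T [:: m; r] = T (sb Y) *m q ->
   forall c, (c < 2)%N -> q *m (smap (bipicket k m r) *m ev k _ c) =
     T (sb Y) ^+ c *m (T (sb Y) ^+ (m - 2) *m (q *m ev k _ 0) + T (sb Y) ^+ (r - 1) *m (q *m ev k _ m)).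
  move=> q h c hc; rewrite edelta fg_ev // gv; change (T (sb (bipicket k m r))) with (T [:: m; r]).
  by rewrite [LHS]mulmxA (comm_pow _ h) -mulmxA Qv.
pose P := ('M[k]_(sumn (sa Y), sumn (sa (bipicket k m r))) *
           'M[k]_(sumn (sb Y), sumn (sb (bipicket k m r))))%type.
have lin1 : linear (fun p : P => p.2 *m ev k _ 0).
  by move=> a u v; rewrite mulmxDl -scalemxAl.
have lin2 : linear (fun p : P => p.2 *m ev k _ m).
  by move=> a u v; rewrite mulmxDl -scalemxAl.
rewrite /homdim -(limg_ker_dim (linfun (fun p : P => p.2 *m ev k _ 0)) (hom_space (bipicket k m r) Y)).
rewrite addnC; congr (_ + _)%N.
  have -> : (linfun (fun p : P => p.2 *m ev k _ 0) @: hom_space (bipicket k m r) Y)%VS = fullv.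
    apply: img_charac => // [p _|x _]; first exact: memvf.
    have hQx : Qm m r x 0 *m ev k _ 0 = x.
      have h0 : (0 < m + r)%N by lia.
      by rewrite (Qm_ev _ _ h0) ifT ?expr0 ?mul1mx //; lia.
    exists (0, Qm m r x 0); last exact: hQx.
    have hQ : Qm m r x 0 *m T [:: m; r] = T (sb Y) *m Qm m r x 0.
      by apply: Qm_comm; rewrite ?Tm ?mul0mx ?mulmx0.
    apply/(@homP _ (bipicket k m r) Y); split.
    + by rewrite mul0mx mulmx0.
    + exact: hQ.
    + apply: mx_evP => c hc; rewrite mulmx0 mul0mx -mulmxA (dlt _ hQ); last by move: hc; rewrite /=; lia.
      by rewrite Tm2 mul0mx add0r Qm_ev ?ltnn ?subnn ?expr0 ?mul1mx ?mulmx0 //; lia.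
  by rewrite dimvf dim_matrix; exact: muln1.
rewrite (dim_inj lin2); last first.
  move=> p; rewrite memv_cap memv_ker lfunE_lin // => /andP [/homP [h1 h2 h3] /eqP h0] hm0.
  have e2 : p.2 = 0 by rewrite (Qm_det h2) h0 hm0 Qm00.
  rewrite e2 mul0mx in h3; have e1 := Finj_mx hY h3.
  by case: p e1 e2 h0 hm0 h1 h2 h3 => p1 p2 /= -> ->.
congr (\dim _); apply: img_charac => //.
- move=> p; rewrite memv_cap memv_ker lfunE_lin // => /andP [/homP [h1 h2 h3] /eqP h0].
  rewrite Wr_mem; apply/andP; split.
    rewrite mulmxA -(comm_pow _ h2) -mulmxA.
    case: (Tpow_ev k [:: m; r] r m) => ->; last by rewrite mulmx0.
    by rewrite ev_out ?mulmx0 //= addn0.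
  have hd := dlt _ h2 0%N isT.
  rewrite [X in X = _]mulmxA -h3 h0 mulmx0 add0r expr0 mul1mx in hd.
  by rewrite -hd -mulmxA in_limgF.
- move=> y; rewrite Wr_mem => /andP [/eqP hy /limgFP [a0 ha]].
  have hTa : T (sa Y) *m a0 = 0.
    apply: hF; rewrite mulmxA FT -mulmxA -ha TS.
    have -> : (r - 1).+1 = r by lia.
    exact: hy.
  have hQ : Qm m r 0 y *m T [:: m; r] = T (sb Y) *m Qm m r 0 y.
    by apply: Qm_comm; rewrite ?mulmx0.
  have h0' : (0 < m + r)%N by lia.
  have hm' : (m < m + r)%N by lia.
  have hQ0 : Qm m r 0 y *m ev k _ 0 = 0 by rewrite (Qm_ev _ _ h0') ifT ?mulmx0 //; lia.
  have hQm : Qm m r 0 y *m ev k _ m = y.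
    by rewrite (Qm_ev _ _ hm') ltnn subnn expr0 mul1mx.
  exists (from_gen 2 a0, Qm m r 0 y); last by rewrite /= hQm.
  rewrite memv_cap memv_ker lfunE_lin // /= hQ0 eqxx andbT.
  apply/(@homP _ (bipicket k m r) Y); split.
  + by apply: L5; rewrite expr2 -mulmxE -mulmxA hTa mulmx0.
  + exact: hQ.
  + apply: mx_evP => c hc; rewrite -[RHS]mulmxA (dlt _ hQ); last by move: hc; rewrite /=; lia.
    rewrite hQ0 hQm mulmx0 add0r. rewrite ha -[LHS]mulmxA [X in _ *m X = _]fg_ev; last by move: hc; rewrite /=; lia.
    by rewrite mulmxA (comm_pow _ FT) -mulmxA.
Qed.

End HomB3.

Theorem lemma4p2 (k : fieldType) (Y Z : sobj k) (al be ga : seq nat) :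
  is_sobj2 Y -> is_sobj2 Z -> has_ptype Y al be ga -> has_ptype Z al be ga ->
  (deltaH Y Z (picket k 1 1) = 0%R
   /\ (forall m : nat, deltaH Y Z (picket k 0 m) = 0%R)
   /\ (forall m : nat, (2 <= m)%N -> deltaH Y Z (picket k 2 m) = 0%R))
  /\ (forall r : nat, (1 <= r)%N ->
        exists M : nat, forall m : nat, (M <= m)%N ->
          deltaH Y Z (bipicket k m r) = deltaH Y Z (picket k 1 r)).
Proof.
move=> hY2 hZ2 hpY hpZ.
have [eaY ebY _ _] := hpY; have [eaZ ebZ _ _] := hpZ.
split; first split; [|split|].
- by rewrite /deltaH !hom11 ?eaY ?eaZ ?subrr //; [case: hY2 | case: hZ2].
- by move=> m; rewrite /deltaH !hom0 ebY ebZ subrr.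
- move=> m hm; have h := hom2 hY2 hpY hm; have h' := hom2 hZ2 hpZ hm.
  rewrite ebY in h; rewrite ebZ in h'; rewrite -h' in h.
  by rewrite /deltaH (addIn h) subrr.
- move=> r hr; exists (sumn be + 2)%N => m hm.
  have hmY : (sumn (sb Y) + 2 <= m)%N by rewrite ebY.
  have hmZ : (sumn (sb Z) + 2 <= m)%N by rewrite ebZ.
  rewrite /deltaH (homB hY2 hr hmY) (homB hZ2 hr hmZ).
  rewrite (@homP1 k Y r (proj1 hY2) hr) (@homP1 k Z r (proj1 hZ2) hr).
  move: (\dim (Wr Y r)) (\dim (Wr Z r)) => wY wZ; rewrite ebY ebZ.
  by rewrite !PoszD opprD addrACA subrr add0r.
Qed.
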